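(* Let $n\ge 3$ and let $\mathfrak{M}=(S,\mathcal{L})$ be a $\big(\binom{n+1}{2}_{\,n-1}\ \binom{n+1}{3}_{\,3}\big)$-configuration. Let $X_1\neq X_2$ be $n$-element subsets of $S$ such that $\mathfrak{M}$ freely contains the complete graphs $K_{X_1}$ and $K_{X_2}$ (these are complete graphs of maximal possible size freely contained in $\mathfrak{M}$), and let $Y_i=S\setminus X_i$, $i=1,2$. Then $Y_1\pitchfork Y_2:=(Y_1\cap Y_2)\cup\big((S\setminus Y_1)\cap(S\setminus Y_2)\big)$ is a hyperplane of $\mathfrak{M}$, and there is no set $C\subseteq S$ of pairwise collinear points of $\mathfrak{M}$ with $Y_1\pitchfork Y_2=S\setminus C$; i.e. $Y_1\pitchfork Y_2$ is not the complement of any complete subgraph of $\mathfrak{M}$.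
   Context: A $(v_r\ b_k)$-configuration is a partial linear space with $v$ points and $b$ lines, each point on exactly $r$ lines and each line containing exactly $k$ points. $\mathfrak{M}$ freely contains the complete graph $K_X$ ($X\subseteq S$) iff any two distinct points of $X$ are collinear, no three points of $X$ lie on a line, and for any disjoint $2$-subsets $\{a_1,a_2\},\{b_1,b_2\}$ of $X$ the line through $a_1,a_2$ and the line through $b_1,b_2$ are disjoint. A subspace is a set of points containing every line that meets it in at least two points; a hyperplane is a proper subspace meeting every line. *)

(* Defs.v *)
From mathcomp Require Import all_boot.
Set Implicit Arguments. Unset Strict Implicit. Unset Printing Implicit Defensive.

Definition is_configuration (T : finType) (L : {set {set T}}) (v r b k : nat) : Prop :=
  [/\ #|T| = v, #|L| = b,
      (forall p : T, #|[set l in L | p \in l]| = r),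
      (forall l, l \in L -> #|l| = k) &
      (forall l1 l2, l1 \in L -> l2 \in L -> l1 != l2 -> #|l1 :&: l2| <= 1)].

Definition collinear (T : finType) (L : {set {set T}}) (p q : T) : Prop :=
  exists2 l, l \in L & (p \in l) && (q \in l).

Definition freely_contains (T : finType) (L : {set {set T}}) (X : {set T}) : Prop :=
  [/\ (forall a b, a \in X -> b \in X -> a != b -> collinear L a b),
      (forall l, l \in L -> #|l :&: X| <= 2) &
      (forall a1 a2 b1 b2 l1 l2,
          a1 \in X -> a2 \in X -> b1 \in X -> b2 \in X ->
          a1 != a2 -> b1 != b2 -> [disjoint [set a1; a2] & [set b1; b2]] ->
          l1 \in L -> l2 \in L -> a1 \in l1 -> a2 \in l1 -> b1 \in l2 -> b2 \in l2 ->
          [disjoint l1 & l2])].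

Definition subspace (T : finType) (L : {set {set T}}) (A : {set T}) : Prop :=
  forall l, l \in L -> 2 <= #|l :&: A| -> l \subset A.

Definition hyperplane (T : finType) (L : {set {set T}}) (A : {set T}) : Prop :=
  [/\ subspace L A, A != setT & (forall l, l \in L -> l :&: A != set0)].

Definition pitchfork (T : finType) (Y1 Y2 : {set T}) : {set T} :=
  (Y1 :&: Y2) :|: (~: Y1 :&: ~: Y2).

Definition pairwise_collinear (T : finType) (L : {set {set T}}) (C : {set T}) : Prop :=
  forall a b, a \in C -> b \in C -> a != b -> collinear L a b.

(* Main.v *)
Require Import Defs.
From mathcomp Require Import all_boot.

Set Implicit Arguments.
Section Aux.
Variables (T : finType) (L : {set {set T}}).

Lemma three_le (A : {set T}) p q z :
  p \in A -> q \in A -> z \in A -> p != q -> q != z -> z != p -> 2 < #|A|.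
Proof. by move=> *; apply/card_gt2P; exists p, q, z. Qed.

Lemma line_eq3 (l : {set T}) p q z : #|l| = 3 ->
  p \in l -> q \in l -> z \in l -> p != q -> q != z -> z != p ->
  forall w, w \in l -> [|| w == p, w == q | w == z].
Proof.
move=> Hl pl ql zl pq qz zp w wl.
have E : [set p; q; z] == l.
  rewrite eqEcard Hl; apply/andP; split.
    by apply/subsetP=> u; rewrite !inE; case/orP => [/orP[]|] /eqP->.
  by apply: (@three_le _ p q z); rewrite ?inE ?eqxx ?orbT.
by move: wl; rewrite -(eqP E) !inE -orbA.
Qed.

Lemma two_lines v r b l1 l2 p q : is_configuration L v r b 3 ->
  l1 \in L -> l2 \in L -> p != q -> p \in l1 -> q \in l1 -> p \in l2 -> q \in l2 ->
  l1 = l2.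
Proof.
case=> _ _ _ _ Hp l1L l2L pq pl1 ql1 pl2 ql2.
apply/eqP; apply: contraT => ne; have := Hp _ _ l1L l2L ne.
suff: 1 < #|l1 :&: l2| by case: ltngtP.
by apply/card_gt1P; exists p, q; rewrite !inE pl1 ql1 pl2 ql2.
Qed.

Lemma no3 (X : {set T}) l p q z : freely_contains L X -> l \in L ->
  p \in l -> q \in l -> z \in l -> p \in X -> q \in X -> z \in X ->
  p != q -> q != z -> z != p -> False.
Proof.
case=> _ H2 _ lL pl ql zl pX qX zX pq qz zp.
have := H2 _ lL.
suff: 2 < #|l :&: X| by case: ltngtP.
by apply: (@three_le _ p q z); rewrite ?inE ?pl ?ql ?zl ?pX ?qX ?zX.
Qed.

Lemma keyK n v b (X : {set T}) : is_configuration L v n.-1 b 3 -> #|X| = n ->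
  freely_contains L X -> forall l x, l \in L -> x \in l -> x \in X ->
  exists2 y, y \in l & (y \in X) && (y != x).
Proof.
move=> Hc HX Hf; case: (Hc) => _ _ Hr _ _; case: (Hf) => Hcol _ _.
move=> l x lL xl xX.
pose F y := odflt set0 [pick l in L | (x \in l) && (y \in l)].
have HF: forall y, y \in X :\ x -> [/\ F y \in L, x \in F y & y \in F y].
  move=> y; rewrite in_setD1 => /andP[yx yX].
  rewrite /F; case: pickP => [l0 /andP[l0L /andP[]]|none] //=.
  have xy : x != y by rewrite eq_sym.
  have [l0 l0L /andP[xl0 yl0]] := Hcol x y xX yX xy.
  by have := none l0; rewrite l0L xl0 yl0.
have Finj: {in X :\ x &, injective F}.
  move=> y z Hy Hz Eyz; apply/eqP; apply: contraT => yz.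
  have [FL xF yF] := HF y Hy; have [_ _ zF] := HF z Hz; rewrite -Eyz in zF.
  move: Hy Hz; rewrite !in_setD1 => /andP[yx yX] /andP[zx zX].
  by exfalso; apply: (no3 Hf FL xF yF zF xX yX zX); rewrite // eq_sym.
have sub: F @: (X :\ x) \subset [set l in L | x \in l].
  apply/subsetP=> l0 /imsetP[y Hy ->]; have [? ? ?] := HF y Hy.
  by rewrite inE; apply/andP.
have card: #|F @: (X :\ x)| = #|[set l in L | x \in l]|.
  by rewrite card_in_imset // Hr -HX (cardsD1 x X) xX.
have := (subset_cardP card sub) l; rewrite inE lL xl /= => /imsetP[y Hy ->].
have [_ _ yF] := HF y Hy; exists y => //.
by move: Hy; rewrite in_setD1 andbC.
Qed.

Lemma xorL n v b (X : {set T}) l p q z : is_configuration L v n.-1 b 3 -> #|X| = n ->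
  freely_contains L X -> l \in L -> p \in l -> q \in l -> z \in l ->
  p != q -> q != z -> z != p -> (p \in X) (+) (q \in X) (+) (z \in X) = false.
Proof.
move=> Hc HX Hf lL pl ql zl pq qz zp.
have Hl : #|l| = 3 by case: Hc => _ _ _ H _; apply: H.
have E3 := line_eq3 Hl pl ql zl pq qz zp.
have G : forall w, w \in l -> w \in X ->
   exists2 y, (y \in X) && (y != w) & [|| y == p, y == q | y == z].
  move=> w wl wX; have [y yl yX] := keyK Hc HX Hf lL wl wX.
  by exists y => //; apply: E3.
have hp : p \in X -> (q \in X) || (z \in X).
  move=> pX; have [y /andP[yX yp]] := G p pl pX.
  case/orP=> [/eqP E|/orP[]/eqP E]; rewrite E in yX yp.
  - by rewrite eqxx in yp.
  - by rewrite yX.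
  - by rewrite yX orbT.
have hq : q \in X -> (p \in X) || (z \in X).
  move=> qX; have [y /andP[yX yp]] := G q ql qX.
  case/orP=> [/eqP E|/orP[]/eqP E]; rewrite E in yX yp.
  - by rewrite yX.
  - by rewrite eqxx in yp.
  - by rewrite yX orbT.
have hz : z \in X -> (p \in X) || (q \in X).
  move=> zX; have [y /andP[yX yp]] := G z zl zX.
  case/orP=> [/eqP E|/orP[]/eqP E]; rewrite E in yX yp.
  - by rewrite yX.
  - by rewrite yX orbT.
  - by rewrite eqxx in yp.
have h3 : ~~ [&& p \in X, q \in X & z \in X].
  apply/negP => /and3P[pX qX zX].
  exact: (no3 Hf lL pl ql zl pX qX zX pq qz zp).
move: hp hq hz h3; case: (p \in X); case: (q \in X); case: (z \in X) => //=.
- by move=> /(_ isT).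
- by move=> _ /(_ isT).
- by move=> _ _ /(_ isT).
Qed.

Lemma memH (X1 X2 : {set T}) p :
  (p \in pitchfork (~: X1) (~: X2)) = ~~ ((p \in X1) (+) (p \in X2)).
Proof. by rewrite /pitchfork !inE !negbK; case: (p \in X1); case: (p \in X2). Qed.
End Aux.

Lemma eq_sym_neq {U : eqType} {x y : U} : x != y -> y != x.
Proof. by rewrite eq_sym. Qed.

Theorem proposition1p8 (n : nat) (T : finType) (L : {set {set T}}) :
  3 <= n ->
  is_configuration L 'C(n.+1, 2) n.-1 'C(n.+1, 3) 3 ->
  forall X1 X2 : {set T},
    X1 != X2 -> #|X1| = n -> #|X2| = n ->
    freely_contains L X1 -> freely_contains L X2 ->
    hyperplane L (pitchfork (~: X1) (~: X2)) /\
    ~ (exists C : {set T}, pairwise_collinear L C /\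
                           pitchfork (~: X1) (~: X2) = ~: C).
Proof.
move=> n3 Hc X1 X2 X12 H1 H2 F1 F2.
set H := pitchfork (~: X1) (~: X2).
have Hl : forall l, l \in L -> #|l| = 3 by case: Hc => _ _ _ H' _.
have [a aX1 aX2] : exists2 a, a \in X1 & a \notin X2.
  apply/subsetPn; apply: contra X12 => sub.
  by rewrite eqEcard sub H1 H2 leqnn.
have [b bX2 bX1] : exists2 b, b \in X2 & b \notin X1.
  apply/subsetPn; apply: contra X12 => sub.
  by rewrite eq_sym eqEcard sub H1 H2 leqnn.
split.
  split.
  - move=> l lL /card_gt1P [p [q [pH qH pq]]].
    move: pH qH => /setIP[pl pH] /setIP[ql qH].
    apply/subsetP=> z zl.
    case zp: (z == p); first by rewrite (eqP zp).
    case zq: (z == q); first by rewrite (eqP zq).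
    have qz : q != z by rewrite eq_sym zq.
    have x1 := xorL Hc H1 F1 lL pl ql zl pq qz (negbT zp).
    have x2 := xorL Hc H2 F2 lL pl ql zl pq qz (negbT zp).
    move: x1 x2 pH qH; rewrite /H !memH.
    by case: (p \in X1); case: (q \in X1); case: (z \in X1);
       case: (p \in X2); case: (q \in X2); case: (z \in X2).
  - apply/negP => /eqP E; have := in_setT a; rewrite -E /H memH aX1.
    by rewrite (negbTE aX2).
  - move=> l lL; have : 2 < #|l| by rewrite Hl.
    case/card_gt2P => [p [q [z [[pl ql zl] [pq qz zp]]]]].
    have x1 := xorL Hc H1 F1 lL pl ql zl pq qz zp.
    have x2 := xorL Hc H2 F2 lL pl ql zl pq qz zp.
    apply/negP => /eqP E.
    have : p \notin l :&: H by rewrite E inE.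
    have : q \notin l :&: H by rewrite E inE.
    have : z \notin l :&: H by rewrite E inE.
    rewrite !in_setI pl ql zl /= /H !memH !negbK.
    move: x1 x2.
    by case: (p \in X1); case: (q \in X1); case: (z \in X1);
       case: (p \in X2); case: (q \in X2); case: (z \in X2).
move=> [C [HC EC]].
have memC : forall p, (p \in C) = (p \in X1) (+) (p \in X2).
  move=> p; have E : (p \in H) = (p \in ~: C) by rewrite EC.
  rewrite in_setC /H memH in E.
  by rewrite -(negbK (p \in C)) -E negbK.
have aC : a \in C by rewrite memC aX1 (negbTE aX2).
have bC : b \in C by rewrite memC bX2 (negbTE bX1).
have ab : a != b by apply: contraNneq bX1 => <-.
have [l lL /andP[al bl]] := HC a b aC bC ab.
have [c cl /andP[cX1 ca]] := keyK Hc H1 F1 lL al aX1.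
have cb : c != b by apply: contraNneq bX1 => <-.
have ac : a != c by rewrite eq_sym.
have bc : b != c by rewrite eq_sym.
have cX2 : c \in X2.
  have := xorL Hc H2 F2 lL al bl cl ab bc ca.
  by rewrite (negbTE aX2) bX2; case: (c \in X2).
have [_ _ Fr1] := F1.
case: (pickP [pred c' | (c' \in X1) && (c' \in X2) && (c' != c)]) =>
   [c' /= /andP[/andP[c'1 c'2] c'c] | none].
  have bc' : b != c' by apply: contraNneq bX1 => ->.
  have [Hc2 _ _] := F2.
  have [l2 l2L /andP[bl2 c'l2]] := Hc2 b c' bX2 c'2 bc'.
  have [x xl2 /andP[xX1 xc']] := keyK Hc H1 F1 l2L c'l2 c'1.
  have xb : x != b by apply: contraNneq bX1 => <-.
  have xX2 : x \notin X2.
    have := xorL Hc H2 F2 l2L bl2 c'l2 xl2 bc' (eq_sym_neq xc') xb.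
    by rewrite bX2 c'2; case: (x \in X2).
  have xa : x != a.
    apply/negP => /eqP xa; rewrite xa in xl2.
    have E := two_lines Hc lL l2L ab al bl xl2 bl2.
    rewrite -E in c'l2.
    have := line_eq3 (Hl l lL) al bl cl ab bc ca c'l2.
    rewrite (negbTE c'c) orbF; case/orP=> /eqP E'.
    - by move: aX2; rewrite -E' c'2.
    - by move: bX1; rewrite -E' c'1.
  have dis : [disjoint [set a; c] & [set x; c']].
    rewrite disjoint_subset; apply/subsetP=> u; rewrite !inE.
    case/orP=> /eqP ->; apply/negP; case/orP=> /eqP E'.
    - by rewrite E' eqxx in xa.
    - by move: aX2; rewrite E' c'2.
    - by move: xX2; rewrite -E' cX2.
    - by rewrite E' eqxx in c'c.
  have := Fr1 a c x c' l l2 aX1 cX1 xX1 c'1 ac xc' dis lL l2L al cl xl2 c'l2.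
  by move/disjointFr => /(_ b bl); rewrite bl2.
have [a' a'X1 a'ac] : exists2 a', a' \in X1 & a' \notin [set a; c].
  apply/subsetPn; apply/negP => /subset_leq_card.
  by rewrite cards2 H1; case: (a != c) => /=; move=> h; move: (leq_trans n3 h).
have a'a : a' != a by apply: contraNneq a'ac => ->; rewrite !inE eqxx.
have a'c : a' != c by apply: contraNneq a'ac => ->; rewrite !inE eqxx orbT.
have a'X2 : a' \notin X2.
  apply/negP => a'X2; have := none a'; rewrite /= a'X1 a'X2 a'c //.
have a'C : a' \in C by rewrite memC a'X1 (negbTE a'X2).
have a'b : a' != b by apply: contraNneq bX1 => <-.
have [l' l'L /andP[a'l' bl']] := HC a' b a'C bC a'b.
have [c' c'l' /andP[c'X1 c'a']] := keyK Hc H1 F1 l'L a'l' a'X1.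
have bc' : b != c' by apply: contraNneq bX1 => ->.
have c'X2 : c' \in X2.
  have := xorL Hc H2 F2 l'L a'l' bl' c'l' a'b bc' c'a'.
  by rewrite (negbTE a'X2) bX2; case: (c' \in X2).
have c'c : c' = c.
  apply/eqP; apply: contraFT (none c') => h; by rewrite /= c'X1 c'X2 h.
rewrite c'c in c'l'.
have E := two_lines Hc lL l'L bc bl cl bl' c'l'.
rewrite -E in a'l'.
exact: (no3 F1 lL al cl a'l' aX1 cX1 a'X1 ac (eq_sym_neq a'c) a'a).
Qed.
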